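(* Let $p\in(0,1)$ and $\Phi(a,s)=p(1-p)(2-s)^2(s-a)-a(1-s)$. Let $f(x)=(2-x)^{2-x}p(1-p)^{1-x}(1-x)^{x-1}$ for $x\le1$ (with $0^0=1$). (a) For each $a\in[0,1]$ there is a unique $s\in[a,1]$ with $\Phi(a,s)=0$; denote it $\phi(a)$. If $a\in\{0,1\}$ then $\phi(a)=a$; if $a\in(0,1)$ then $0<a<\phi(a)<1$. (b) For $a\in(0,1)$, if $s=\phi(a)$ then $\dfrac{s f(s)^{a/s}}{a^{a/s}(s-a)^{1-a/s}}=\dfrac{s}{s-a}\left(\dfrac{1-s}{(1-p)(2-s)}\right)^a$. (c) $\phi$ is increasing on $[0,1]$ and differentiable on $(0,1)$. (d) $\phi$ is invertible and $\phi^{-1}$ is increasing; if $s\in\{0,1\}$ then $\phi^{-1}(s)=s$; if $s\in(0,1)$ then $0<\phi^{-1}(s)<s<1$. *)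

(* Defs.v *)
From Stdlib Require Import Reals.
From Coquelicot Require Import Coquelicot.
Open Scope R_scope.

Definition Phi (p a s : R) : R :=
  p * (1 - p) * (2 - s) ^ 2 * (s - a) - a * (1 - s).

(* Real power with the convention 0^0 = 1 (and 0^y = 0 for y <> 0);
   for x > 0 it is Rpower x y = exp (y ln x). *)
Definition rpow (x y : R) : R :=
  if Rlt_dec 0 x then Rpower x y
  else if Req_EM_T y 0 then 1 else 0.

Definition fpow (p x : R) : R :=
  rpow (2 - x) (2 - x) * p * rpow (1 - p) (1 - x) * rpow (1 - x) (x - 1).

(* Main.v *)
Require Import Defs.
From Stdlib Require Import Reals Lra Psatz Ranalysis5.
From Coquelicot Require Import Coquelicot.
Open Scope R_scope.

Definition Dn (p s : R) := 1 - s + p*(1-p)*(2-s)^2.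
Definition gg (p s : R) := p*(1-p)*s*(2-s)^2 / Dn p s.
Definition gd (p s : R) :=
  p*(1-p)*(2-s)*(2 - 3*s + 2*s^2 + p*(1-p)*(2-s)^3) / (Dn p s)^2.

Lemma Dn_pos p s : 0 < p < 1 -> s <= 1 -> 0 < Dn p s.
Proof. intros hp hs. unfold Dn.
assert (0 < p*(1-p)) by nra. assert (0 < (2-s)^2) by nra. nra. Qed.

Lemma Phi_gg p a s : 0 < p < 1 -> s <= 1 -> (Phi p a s = 0 <-> a = gg p s).
Proof. intros hp hs. pose proof (Dn_pos p s hp hs).
unfold Phi, gg. split; intro E.
- apply (Rmult_eq_reg_r (Dn p s)); [|lra]. unfold Rdiv. rewrite Rmult_assoc, Rinv_l by lra.
  unfold Dn. lra.
- subst a. unfold Dn in *. field. lra.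
Qed.

Lemma gg_deriv p s : 0 < p < 1 -> s <= 1 -> derivable_pt_lim (gg p) s (gd p s).
Proof. intros hp hs. pose proof (Dn_pos p s hp hs).
apply is_derive_Reals. unfold gg, gd, Dn in *. auto_derive.
- lra.
- field. lra.
Qed.

Lemma gd_pos p s : 0 < p < 1 -> s <= 1 -> 0 < gd p s.
Proof. intros hp hs. pose proof (Dn_pos p s hp hs). unfold gd.
assert (0 < p*(1-p)) by nra. assert (0 < (2-s)^3) by (apply pow_lt; lra).
apply Rdiv_lt_0_compat; [|apply pow_lt; lra].
apply Rmult_lt_0_compat. nra. nra. Qed.

Lemma gg_incr p x y : 0 < p < 1 -> x < y -> y <= 1 -> gg p x < gg p y.
Proof. intros hp hxy hy.
destruct (MVT_cor2 (gg p) (gd p) x y hxy) as [c [E Hc]].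
{ intros c Hc. apply gg_deriv; lra. }
pose proof (gd_pos p c hp ltac:(lra)). nra. Qed.

Lemma gg_inj p x y : 0 < p < 1 -> x <= 1 -> y <= 1 -> gg p x = gg p y -> x = y.
Proof. intros hp hx hy E. destruct (Rtotal_order x y) as [h|[h|h]]; auto.
- pose proof (gg_incr p x y hp h hy). lra.
- pose proof (gg_incr p y x hp h hx). lra. Qed.

Lemma gg0 p : 0 < p < 1 -> gg p 0 = 0.
Proof. intros. unfold gg. pose proof (Dn_pos p 0 H ltac:(lra)). field. lra. Qed.
Lemma gg1 p : 0 < p < 1 -> gg p 1 = 1.
Proof. intros. unfold gg. pose proof (Dn_pos p 1 H ltac:(lra)). unfold Dn in *. field. lra. Qed.

Lemma gg_lt p s : 0 < p < 1 -> 0 < s < 1 -> 0 < gg p s < s.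
Proof. intros hp hs. pose proof (Dn_pos p s hp ltac:(lra)).
assert (0 < p*(1-p)) by nra. assert (0 < (2-s)^2) by nra. unfold gg. split.
- apply Rdiv_lt_0_compat; auto. apply Rmult_lt_0_compat; [|auto]. apply Rmult_lt_0_compat; [auto|lra].
- apply Rmult_lt_reg_r with (Dn p s); auto. unfold Rdiv. rewrite Rmult_assoc, Rinv_l by lra.
  unfold Dn in *. assert (0 < s*(1-s)) by nra. nra.
Qed.

Lemma rpow_pos x y : 0 < x -> rpow x y = exp (y * ln x).
Proof. intros h. unfold rpow. destruct (Rlt_dec 0 x); [reflexivity|lra]. Qed.

Lemma part_b p a s : 0 < p < 1 -> 0 < a -> a < s -> s < 1 -> Phi p a s = 0 ->
  s * rpow (fpow p s) (a / s) / (rpow a (a / s) * rpow (s - a) (1 - a / s))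
  = s / (s - a) * rpow ((1 - s) / ((1 - p) * (2 - s))) a.
Proof.
intros hp ha has hs E.
assert (hK : fpow p s = exp ((2-s)*ln(2-s) + ln p + (1-s)*ln(1-p) + (s-1)*ln(1-s))).
{ unfold fpow. rewrite !rpow_pos by lra. rewrite !exp_plus, exp_ln by lra. ring. }
rewrite hK. rewrite !rpow_pos by (try apply exp_pos; try apply Rdiv_lt_0_compat; nra).
rewrite ln_exp. rewrite ln_div by nra. rewrite ln_mult by lra.
assert (HR : ln p + ln (1-p) + 2 * ln (2-s) + ln (s-a) = ln a + ln (1-s)).
{ assert (E2 : p*(1-p)*((2-s)*(2-s))*(s-a) = a*(1-s)) by (unfold Phi in E; replace ((2-s)*(2-s)) with ((2-s)^2) by ring; lra).
  apply (f_equal ln) in E2. rewrite !ln_mult in E2 by (repeat apply Rmult_lt_0_compat; lra). lra. }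
assert (Hs : s / (s - a) = s * exp (- ln (s-a))) by
  (rewrite exp_Ropp, exp_ln by lra; reflexivity).
rewrite Hs.
set (t := a / s). assert (ts : t * s = a) by (unfold t; field; lra).
set (L := ln (2-s)) in *. set (P := ln p) in *. set (Q := ln (1-p)) in *.
set (S := ln (1-s)) in *. set (A := ln a) in *. set (B := ln (s-a)) in *.
assert (LHS : forall X Y Z, s * exp X / (exp Y * exp Z) = s * exp (X - Y - Z)).
{ intros. unfold Rminus. rewrite !exp_plus, !exp_Ropp.
  pose proof (exp_pos Y). pose proof (exp_pos Z). field. lra. }
rewrite LHS. rewrite Rmult_assoc, <- exp_plus.
f_equal. f_equal. clearbody t L P Q S A B.
assert (HB : B = A + S - P - Q - 2 * L) by lra. rewrite HB. rewrite <- ts. ring.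
Qed.

Theorem lemma14 (p : R) (hp : 0 < p < 1) :
  (forall a : R, 0 <= a <= 1 ->
     exists! s : R, a <= s <= 1 /\ Phi p a s = 0) /\
  (forall phi : R -> R,
     (forall a : R, 0 <= a <= 1 -> a <= phi a <= 1 /\ Phi p a (phi a) = 0) ->
     phi 0 = 0 /\ phi 1 = 1 /\
     (forall a : R, 0 < a < 1 -> 0 < a < phi a /\ phi a < 1) /\
     (forall a : R, 0 < a < 1 ->
        let s := phi a in
        s * rpow (fpow p s) (a / s)
          / (rpow a (a / s) * rpow (s - a) (1 - a / s))
        = s / (s - a) * rpow ((1 - s) / ((1 - p) * (2 - s))) a) /\
     (forall x y : R, 0 <= x <= 1 -> 0 <= y <= 1 -> x < y -> phi x < phi y) /\
     (forall a : R, 0 < a < 1 -> ex_derive phi a) /\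
     (exists psi : R -> R,
        (forall a : R, 0 <= a <= 1 -> 0 <= phi a <= 1 /\ psi (phi a) = a) /\
        (forall s : R, 0 <= s <= 1 -> 0 <= psi s <= 1 /\ phi (psi s) = s) /\
        (forall x y : R, 0 <= x <= 1 -> 0 <= y <= 1 -> x < y -> psi x < psi y) /\
        psi 0 = 0 /\ psi 1 = 1 /\
        (forall s : R, 0 < s < 1 -> 0 < psi s /\ psi s < s /\ s < 1))).
Proof.
pose proof (gg0 p hp) as G0. pose proof (gg1 p hp) as G1.
assert (Grange : forall s, 0 <= s <= 1 -> 0 <= gg p s <= 1).
{ intros s hs. destruct (Req_dec s 0) as [->|n0]; [lra|].
  destruct (Req_dec s 1) as [->|n1]; [lra|].
  pose proof (gg_lt p s hp ltac:(lra)). lra. }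
split.
- intros a ha.
  destruct (IVT_cor (fun s => Phi p a s) a 1) as [s [hs hz]].
  + apply derivable_continuous. intro x. apply ex_derive_Reals_0. unfold Phi. auto_derive. auto.
  + lra.
  + unfold Phi. assert (0 < p*(1-p)) by nra.
    assert (0 <= p*(1-p)*(2-1)^2*(1-a)) by (apply Rmult_le_pos; [nra|lra]).
    assert (a*(1-a) >= 0) by nra. nra.
  + exists s. split; [split; auto|].
    intros s' [hs' hz']. apply (gg_inj p); try lra.
    apply Phi_gg in hz; [|auto|lra]. apply Phi_gg in hz'; [|auto|lra]. congruence.
- intros phi Hphi.
  assert (Hg : forall a, 0 <= a <= 1 -> gg p (phi a) = a).
  { intros a ha. destruct (Hphi a ha) as [h1 h2]. apply Phi_gg in h2; [|auto|lra]. auto. }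
  assert (Hr : forall a, 0 <= a <= 1 -> 0 <= phi a <= 1).
  { intros a ha. destruct (Hphi a ha). lra. }
  assert (P0 : phi 0 = 0).
  { pose proof (Hr 0 ltac:(lra)). apply (gg_inj p); try lra. rewrite Hg by lra. auto. }
  assert (P1 : phi 1 = 1).
  { pose proof (Hr 1 ltac:(lra)). apply (gg_inj p); try lra. rewrite Hg by lra. auto. }
  assert (Pinc : forall x y : R, 0 <= x <= 1 -> 0 <= y <= 1 -> x < y -> phi x < phi y).
  { intros x y hx hy hxy. destruct (Rlt_or_le (phi x) (phi y)) as [h|h]; auto.
    destruct (Req_dec (phi x) (phi y)) as [e|ne].
    - apply (f_equal (gg p)) in e. rewrite !Hg in e by lra. lra.
    - pose proof (Hr x hx). pose proof (Hr y hy).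
      pose proof (gg_incr p (phi y) (phi x) hp ltac:(lra) ltac:(lra)).
      rewrite !Hg in H1 by lra. lra. }
  assert (Pbd : forall a : R, 0 < a < 1 -> 0 < a < phi a /\ phi a < 1).
  { intros a ha. destruct (Hphi a ltac:(lra)) as [h1 h2].
    pose proof (Pinc a 1 ltac:(lra) ltac:(lra) ltac:(lra)).
    destruct (Req_dec (phi a) a) as [e|ne].
    - pose proof (Hg a ltac:(lra)). rewrite e in H0.
      pose proof (gg_lt p a hp ha). lra.
    - lra. }
  split; [auto|]. split; [auto|]. split; [auto|].
  split.
  { intros a ha. cbv zeta. destruct (Pbd a ha). destruct (Hphi a ltac:(lra)).
    apply part_b; tauto || lra. }
  split; [auto|].
  split.
  { intros a ha. apply ex_derive_Reals_1.
    assert (Hlb : (0:R) < 1) by lra.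
    assert (xe : gg p 0 < a < gg p 1) by (rewrite G0, G1; lra).
    assert (feq : forall x, gg p 0 <= x -> x <= gg p 1 -> comp (gg p) phi x = id x).
    { intros x h1 h2. rewrite G0, G1 in *. unfold comp, id. apply Hg. lra. }
    assert (gwf : forall x, gg p 0 <= x -> x <= gg p 1 -> 0 <= phi x <= 1).
    { intros x h1 h2. rewrite G0, G1 in *. apply Hr. lra. }
    assert (finc : forall x y, 0 <= x -> x < y -> y <= 1 -> gg p x < gg p y).
    { intros x y h1 h2 h3. apply gg_incr; auto. }
    assert (fd : forall a, 0 <= a <= 1 -> derivable_pt (gg p) a).
    { intros b hb. exists (gd p b). apply gg_deriv; auto; lra. }
    apply (derivable_pt_recip_interv (gg p) phi 0 1 a Hlb xe feq gwf finc fd).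
    rewrite (derive_pt_eq_0 _ _ (gd p (phi a))).
    - pose proof (gd_pos p (phi a) hp ltac:(pose proof (Hr a ltac:(lra)); lra)). lra.
    - apply gg_deriv; auto. pose proof (Hr a ltac:(lra)); lra. }
  exists (gg p). split; [|split; [|split; [|split; [|split]]]].
  + intros a ha. split; auto.
  + intros s hs. split; auto. apply (gg_inj p); try lra.
    * pose proof (Hr (gg p s) (Grange s hs)); lra.
    * apply Hg, Grange, hs.
  + intros x y hx hy hxy. apply gg_incr; auto; lra.
  + auto.
  + auto.
  + intros s hs. pose proof (gg_lt p s hp hs). lra.
Qed.
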